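(* Let $X$ and $Y$ be metric spaces and $\mathcal F\subseteq Y^X$. (1) If $\mathcal F$ has (PECP), then $\mathcal F$ is equi-Baire 1. (2) If $X$ is hereditarily Baire, then $\mathcal F$ is equi-Baire 1 if and only if $\mathcal F$ has (PECP).
   Context: Let $(X,\rho)$, $(Y,d)$ be metric spaces. $\mathcal F\subseteq Y^X$ is equi-Baire 1 if for every $\varepsilon>0$ there is $\delta_\varepsilon\colon X\to(0,\infty)$ such that for all $x,y\in X$ and all $f\in\mathcal F$, $\rho(x,y)<\min\{\delta_\varepsilon(x),\delta_\varepsilon(y)\}$ implies $d(f(x),f(y))<\varepsilon$. $\mathcal F$ has (PECP) if for every nonempty closed $F\subseteq X$ the family $\{f|_F:f\in\mathcal F\}$ has a point of equicontinuity, i.e. a point $x\in F$ such that for every $\varepsilon>0$ there is a neighborhood $U$ of $x$ with $d(f(x'),f(x))<\varepsilon$ for all $x'\in U\cap F$ and $f\in\mathcal F$. A space is hereditarily Baire if every nonempty closed subspace is a Baire space (every nonempty open subset nonmeager in itself). *)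

(* Defs.v *)
From Stdlib Require Export Reals.
Open Scope R_scope.

Definition is_metric {X : Type} (m : X -> X -> R) : Prop :=
  (forall x y, m x y = 0 <-> x = y) /\
  (forall x y, m x y = m y x) /\
  (forall x y z, m x z <= m x y + m y z).

Section Metric.
Context {X : Type} (rho : X -> X -> R).

Definition nbhd (x : X) (U : X -> Prop) : Prop :=
  exists r, 0 < r /\ forall y, rho x y < r -> U y.

Definition closed_set (F : X -> Prop) : Prop :=
  forall x, (forall r, 0 < r -> exists y, F y /\ rho x y < r) -> F x.

Definition open_in (S U : X -> Prop) : Prop :=
  (forall x, U x -> S x) /\
  forall x, U x -> exists r, 0 < r /\ forall y, S y -> rho x y < r -> U y.

Definition closure_in (S A : X -> Prop) (x : X) : Prop :=
  S x /\ forall r, 0 < r -> exists y, A y /\ rho x y < r.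

Definition interior_in (S B : X -> Prop) (x : X) : Prop :=
  S x /\ exists r, 0 < r /\ forall y, S y -> rho x y < r -> B y.

Definition nowhere_dense_in (S A : X -> Prop) : Prop :=
  (forall x, A x -> S x) /\ forall x, ~ interior_in S (closure_in S A) x.

Definition meager_in (S A : X -> Prop) : Prop :=
  exists N : nat -> X -> Prop,
    (forall n, nowhere_dense_in S (N n)) /\
    forall x, A x -> exists n, N n x.

Definition Baire_space (S : X -> Prop) : Prop :=
  forall U, open_in S U -> (exists x, U x) -> ~ meager_in U U.

Definition hereditarily_Baire : Prop :=
  forall F, closed_set F -> (exists x, F x) -> Baire_space F.

End Metric.

Section Families.
Context {X Y : Type} (rho : X -> X -> R) (d : Y -> Y -> R).

Definition equi_Baire1 (fam : (X -> Y) -> Prop) : Prop :=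
  forall eps, 0 < eps ->
    exists delta : X -> R, (forall x, 0 < delta x) /\
      forall x y f, fam f -> rho x y < Rmin (delta x) (delta y) ->
        d (f x) (f y) < eps.

Definition equicont_point (fam : (X -> Y) -> Prop) (F : X -> Prop) (x : X) : Prop :=
  F x /\ forall eps, 0 < eps ->
    exists U, nbhd rho x U /\
      forall x' f, U x' -> F x' -> fam f -> d (f x') (f x) < eps.

Definition PECP (fam : (X -> Y) -> Prop) : Prop :=
  forall F, closed_set rho F -> (exists x, F x) ->
    exists x, equicont_point fam F x.

End Families.

(* Main.v *)
From Stdlib Require Import Reals Lra Lia Classical ClassicalEpsilon.
Require Import Defs.
Open Scope R_scope.

Lemma m_refl {X} (m : X -> X -> R) : is_metric m -> forall x, m x x = 0.
Proof. intros [H _] x. apply H. reflexivity. Qed.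
Lemma m_sym {X} (m : X -> X -> R) : is_metric m -> forall x y, m x y = m y x.
Proof. intros [_ [H _]]. exact H. Qed.
Lemma m_tri {X} (m : X -> X -> R) : is_metric m -> forall x y z, m x z <= m x y + m y z.
Proof. intros [_ [_ H]]. exact H. Qed.

Definition incl {X} (A B : X -> Prop) := forall x, A x -> B x.

Inductive tower {X : Type} (D : (X -> Prop) -> (X -> Prop)) : (X -> Prop) -> Prop :=
| tw_int : forall S : (X -> Prop) -> Prop, (forall A, S A -> tower D A) ->
    tower D (fun x => forall A, S A -> A x)
| tw_D : forall A, tower D A -> tower D (D A).

Definition extreme {X} (D : (X->Prop)->(X->Prop)) (A : X -> Prop) :=
  forall B, tower D B -> incl A B -> incl B A \/ incl A (D B).

Lemma M_lemma {X} (D : (X->Prop)->(X->Prop))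
  (Dsub : forall A, incl (D A) A)
  (Dext : forall A B, incl A B -> incl B A -> incl (D A) (D B))
  A : extreme D A -> forall B, tower D B -> incl A B \/ incl B (D A).
Proof.
  intros HA B HB. induction HB as [S HS IH | B HB IH].
  - destruct (classic (exists C, S C /\ incl C (D A))) as [[C [SC HC]] | Hn].
    + right. intros x Hx. apply HC. apply Hx. exact SC.
    + left. intros x Ax C SC. destruct (IH C SC) as [H|H].
      * apply H; exact Ax.
      * exfalso; apply Hn; exists C; split; assumption.
  - destruct IH as [H|H].
    + destruct (classic (incl B A)) as [H'|H'].
      * right. apply Dext; assumption.
      * destruct (HA B HB H) as [H2|H2]; [contradiction|left; exact H2].
    + right. intros x Hx. apply H. apply Dsub. exact Hx.
Qed.

Lemma all_extreme {X} (D : (X->Prop)->(X->Prop))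
  (Dsub : forall A, incl (D A) A)
  (Dext : forall A B, incl A B -> incl B A -> incl (D A) (D B))
  (A : X -> Prop) : tower D A -> extreme D A.
Proof.
  intros HA. induction HA as [S HS IH | A HA IH].
  - intros B HB Hinc.
    destruct (classic (incl B (fun x => forall A, S A -> A x))) as [H|H]; [left; exact H|].
    right.
    apply not_all_ex_not in H. destruct H as [x Hx].
    apply imply_to_and in Hx. destruct Hx as [Bx Hx].
    apply not_all_ex_not in Hx. destruct Hx as [C HC].
    apply imply_to_and in HC. destruct HC as [SC nCx].
    destruct (M_lemma D Dsub Dext C (IH C SC) B HB) as [H1|H1].
    + destruct (IH C SC B HB H1) as [H2|H2].
      * exfalso. apply nCx. apply H2. exact Bx.
      * intros y Hy. apply H2. apply Hy. exact SC.
    + exfalso. apply nCx. apply Dsub. apply H1. exact Bx.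
  - intros B HB Hinc.
    destruct (M_lemma D Dsub Dext A IH B HB) as [H1|H1].
    + destruct (classic (incl B A)) as [H2|H2].
      * right. apply Dext; assumption.
      * destruct (IH B HB H1) as [H3|H3]; [contradiction|].
        right. intros x Hx. apply H3. apply Dsub. exact Hx.
    + left. exact H1.
Qed.

Lemma tower_chain {X} (D : (X->Prop)->(X->Prop))
  (Dsub : forall A, incl (D A) A)
  (Dext : forall A B, incl A B -> incl B A -> incl (D A) (D B))
  (A B : X -> Prop) : tower D A -> tower D B -> incl A B \/ incl B A.
Proof.
  intros HA HB.
  destruct (M_lemma D Dsub Dext A (all_extreme D Dsub Dext A HA) B HB) as [H|H];
    [left; exact H| right; intros x Hx; apply Dsub, H, Hx].
Qed.

Definition good {X Y} (rho : X->X->R) (d : Y->Y->R) (fam : (X -> Y) -> Prop)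
  (eps : R) (A : X -> Prop) (x : X) :=
  exists r, 0 < r /\ forall y z f, A y -> A z -> rho x y < r -> rho x z < r -> fam f -> d (f y) (f z) < eps.
Definition Dop {X Y} (rho : X->X->R) (d : Y->Y->R) (fam : (X -> Y) -> Prop) (eps : R) (A : X -> Prop) : X -> Prop :=
  fun x => A x /\ ~ good rho d fam eps A x.

Lemma tower_closed {X Y} (rho : X->X->R) (d : Y->Y->R) (fam : (X -> Y) -> Prop) (eps : R) : is_metric rho ->
  forall A : X -> Prop, tower (Dop rho d fam eps) A -> closed_set rho A.
Proof.
  intros Hm A HA. induction HA as [S HS IH | A HA IH].
  - intros x Hx C SC. apply (IH C SC). intros r Hr. destruct (Hx r Hr) as [y [Hy Hr']].
    exists y. split; [apply Hy; exact SC | exact Hr'].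
  - intros x Hx.
    assert (Ax : A x).
    { apply IH. intros r Hr. destruct (Hx r Hr) as [y [[Ay _] H]]. exists y; split; assumption. }
    split; [exact Ax|]. intros [r [Hr Hg]].
    destruct (Hx (r/2) ltac:(lra)) as [y [[Ay Hng] Hxy]].
    apply Hng. exists (r/2). split; [lra|]. intros z w f Az Aw Hz Hw Hf.
    apply Hg; try assumption.
    + pose proof (m_tri rho Hm x y z). lra.
    + pose proof (m_tri rho Hm x y w). lra.
Qed.

Lemma part1 {X Y} (rho : X->X->R) (d : Y->Y->R) : is_metric rho -> is_metric d ->
  forall fam, PECP rho d fam -> equi_Baire1 rho d fam.
Proof.
  intros Hr Hd fam HP eps Heps.
  pose (D := Dop rho d fam eps).
  assert (Dsub : forall A, incl (D A) A) by (intros A x [H _]; exact H).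
  assert (Dext : forall A B, incl A B -> incl B A -> incl (D A) (D B)).
  { intros A B H1 H2 x [Ax Hn]. split; [apply H1; exact Ax|]. intros [r [r0 Hg]].
    apply Hn. exists r. split; [exact r0|]. intros y z f Ay Az H3 H4 H5.
    apply Hg; auto. }
  pose (C := fun x : X => fun z => forall A, (tower D A /\ A x) -> A z).
  assert (Ct : forall x, tower D (C x)).
  { intros x. exact (tw_int D (fun A => tower D A /\ A x) (fun A H => proj1 H)). }
  assert (Cx : forall x, C x x) by (intros x A [_ H]; exact H).
  assert (Cg : forall x, good rho d fam eps (C x) x).
  { intros x. apply NNPP. intros Hn.
    assert (HD : incl (C x) (D (C x))).
    { intros z Hz. apply Hz. split; [apply tw_D, Ct | split; [apply Cx | exact Hn]]. }
    destruct (HP (C x) (tower_closed rho d fam eps Hr _ (Ct x)) (ex_intro _ x (Cx x))) as [p [Cp Hp]].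
    destruct (Hp (eps/2) ltac:(lra)) as [U [[r [r0 HU]] HpU]].
    destruct (HD p Cp) as [_ Hng]. apply Hng.
    exists r. split; [exact r0|]. intros y z f Cy Cz Hy Hz Hf.
    pose proof (HpU y f (HU y Hy) Cy Hf) as T1. pose proof (HpU z f (HU z Hz) Cz Hf) as T2.
    pose proof (m_tri d Hd (f y) (f p) (f z)) as T3. rewrite (m_sym d Hd (f p) (f z)) in T3. lra. }
  assert (Hch : forall x, {r : R | 0 < r /\ forall y z f, C x y -> C x z -> rho x y < r -> rho x z < r -> fam f -> d (f y) (f z) < eps}).
  { intros x. apply constructive_indefinite_description. exact (Cg x). }
  exists (fun x => proj1_sig (Hch x)). split.
  - intros x. exact (proj1 (proj2_sig (Hch x))).
  - intros x y f Hf Hxy.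
    destruct (proj2_sig (Hch x)) as [px Gx]. destruct (proj2_sig (Hch y)) as [py Gy].
    pose proof (Rmin_l (proj1_sig (Hch x)) (proj1_sig (Hch y))).
    pose proof (Rmin_r (proj1_sig (Hch x)) (proj1_sig (Hch y))).
    destruct (tower_chain D Dsub Dext (C x) (C y) (Ct x) (Ct y)) as [Hc|Hc].
    + apply (Gy x y f (Hc x (Cx x)) (Cx y)); [rewrite (m_sym rho Hr); lra | rewrite (m_refl rho Hr); lra | exact Hf].
    + apply (Gx x y f (Cx x) (Hc y (Cx y))); [rewrite (m_refl rho Hr); lra | lra | exact Hf].
Qed.

Definition Oset {X Y} (rho : X->X->R) (d:Y->Y->R) (fam : (X -> Y) -> Prop) (F : X -> Prop) (e : R) (x : X) :=
  F x /\ exists s, 0 < s /\ forall y z f, F y -> F z -> rho x y < s -> rho x z < s -> fam f -> d (f y) (f z) < e.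

Lemma small_inv : forall e, 0 < e -> exists n : nat, / INR (S n) < e.
Proof. intros e He. destruct (archimed_cor1 e He) as [N [H1 H2]]. destruct N as [|n]; [lia|]. exists n. exact H1. Qed.
Lemma inv_pos : forall n, 0 < / INR (S n).
Proof. intros n. apply Rinv_0_lt_compat. apply lt_0_INR. lia. Qed.

Lemma dense {X Y} (rho : X->X->R) (d:Y->Y->R) (fam : (X -> Y) -> Prop) (F : X -> Prop) : is_metric rho -> is_metric d ->
  Baire_space rho F -> equi_Baire1 rho d fam ->
  forall e, 0 < e -> forall V, open_in rho F V -> (exists x, V x) -> exists p, V p /\ Oset rho d fam F e p.
Proof.
  intros Hr Hd HB HE e He V HV Vne.
  destruct (HE (e/4) ltac:(lra)) as [dl [dpos Hdl]].
  assert (Hex : exists n, ~ nowhere_dense_in rho V (fun x => V x /\ / INR (S n) < dl x)).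
  { apply NNPP. intros Hn. apply (HB V HV Vne). exists (fun n x => V x /\ / INR (S n) < dl x). split.
    - intros n. apply NNPP. intros H. apply Hn. exists n. exact H.
    - intros x Vx. destruct (small_inv (dl x) (dpos x)) as [n Hn']. exists n. split; assumption. }
  destruct Hex as [n Hn].
  assert (Hi : exists x, interior_in rho V (closure_in rho V (fun x => V x /\ / INR (S n) < dl x)) x).
  { apply NNPP. intros H. apply Hn. split.
    - intros x [Vx _]. exact Vx.
    - intros x Hx. apply H. exists x. exact Hx. }
  destruct Hi as [x [Vx [r [r0 Hint]]]].
  pose proof (inv_pos n) as c0.
  destruct (Hint x Vx ltac:(rewrite (m_refl rho Hr); lra)) as [_ Hcl].
  destruct (Hcl (r/2) ltac:(lra)) as [p [[Vp dp] Hxp]].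
  destruct HV as [VF Vop].
  destruct (Vop p Vp) as [r1 [r1p Hr1]].
  assert (Key : forall y f, F y -> rho p y < Rmin r1 (Rmin (r/2) (/ INR (S n)/2)) -> fam f -> d (f y) (f p) < e/2).
  { intros y f Fy Hpy Hf.
    pose proof (Rmin_l r1 (Rmin (r/2) (/ INR (S n)/2))).
    pose proof (Rmin_r r1 (Rmin (r/2) (/ INR (S n)/2))).
    pose proof (Rmin_l (r/2) (/ INR (S n)/2)) as R3. pose proof (Rmin_r (r/2) (/ INR (S n)/2)) as R4.
    assert (Vy : V y) by (apply Hr1; [exact Fy | lra]).
    assert (xy : rho x y < r) by (pose proof (m_tri rho Hr x p y); lra).
    destruct (Hint y Vy xy) as [_ Hcy].
    assert (m0 : 0 < Rmin (dl y) (/ INR (S n)/2)) by (apply Rmin_pos; [apply dpos | lra]).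
    destruct (Hcy _ m0) as [q [[Vq dq] Hyq]].
    pose proof (Rmin_l (dl y) (/ INR (S n)/2)) as R5. pose proof (Rmin_r (dl y) (/ INR (S n)/2)) as R6.
    assert (H1 : d (f y) (f q) < e/4).
    { apply (Hdl y q f Hf). apply Rmin_glb_lt; lra. }
    assert (H2 : d (f q) (f p) < e/4).
    { apply (Hdl q p f Hf). pose proof (m_tri rho Hr q y p) as T.
      rewrite (m_sym rho Hr q y) in T. rewrite (m_sym rho Hr y p) in T. apply Rmin_glb_lt; lra. }
    pose proof (m_tri d Hd (f y) (f q) (f p)). lra. }
  exists p. split; [exact Vp|]. split; [apply VF; exact Vp|].
  exists (Rmin r1 (Rmin (r/2) (/ INR (S n)/2))). split.
  { apply Rmin_pos; [lra| apply Rmin_pos; lra]. }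
  intros y z f Fy Fz Hy Hz Hf.
  pose proof (Key y f Fy Hy Hf). pose proof (Key z f Fz Hz Hf).
  pose proof (m_tri d Hd (f y) (f p) (f z)) as T. rewrite (m_sym d Hd (f p) (f z)) in T. lra.
Qed.

Lemma part2 {X Y} (rho : X->X->R) (d:Y->Y->R) (fam : (X -> Y) -> Prop) : is_metric rho -> is_metric d ->
  hereditarily_Baire rho -> equi_Baire1 rho d fam -> PECP rho d fam.
Proof.
  intros Hr Hd hB HE F Fc Fne.
  pose proof (hB F Fc Fne) as HB.
  assert (Heq : forall x, (forall k, Oset rho d fam F (/ INR (S k)) x) -> equicont_point rho d fam F x).
  { intros x Hk. destruct (Hk O) as [Fx _]. split; [exact Fx|]. intros eps Heps.
    destruct (small_inv eps Heps) as [k Hkl]. destruct (Hk k) as [_ [s [s0 Hs]]].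
    exists (fun y => rho x y < s). split; [exists s; split; [exact s0| intros y Hy; exact Hy]|].
    intros x' f Ux' Fx' Hf.
    pose proof (Hs x' x f Fx' Fx Ux' ltac:(rewrite (m_refl rho Hr); lra) Hf). lra. }
  apply NNPP. intros Hno.
  assert (HO : open_in rho F F).
  { split; [intros x Hx; exact Hx| intros x Fx; exists 1; split; [lra| intros y Fy _; exact Fy]]. }
  refine (HB F HO Fne _).
  exists (fun k x => F x /\ ~ Oset rho d fam F (/ INR (S k)) x). split.
  - intros k. split; [intros x [Fx _]; exact Fx|].
    intros x [Fx [r [r0 Hint]]].
    destruct (dense rho d fam F Hr Hd HB HE (/ INR (S k)) (inv_pos k) (fun y => F y /\ rho x y < r))
      as [p [[Fp xp] [_ [s [s0 Hs]]]]].
    + split; [intros y [Fy _]; exact Fy|]. intros y [Fy xy]. exists (r - rho x y). split; [lra|].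
      intros z Fz yz. split; [exact Fz|]. pose proof (m_tri rho Hr x y z). lra.
    + exists x. split; [exact Fx| rewrite (m_refl rho Hr); lra].
    + destruct (Hint p Fp xp) as [_ Hcl]. destruct (Hcl (s/2) ltac:(lra)) as [q [[Fq nq] pq]].
      apply nq. split; [exact Fq|]. exists (s/2). split; [lra|]. intros y z f Fy Fz Hy Hz Hf.
      apply Hs; try assumption.
      * pose proof (m_tri rho Hr p q y). lra.
      * pose proof (m_tri rho Hr p q z). lra.
  - intros x Fx. apply NNPP. intros Hn. apply Hno. exists x. apply Heq. intros k.
    apply NNPP. intros Hk. apply Hn. exists k. split; assumption.
Qed.

Theorem proposition3p5 :
  forall (X Y : Type) (rho : X -> X -> R) (d : Y -> Y -> R),
    is_metric rho -> is_metric d ->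
    forall fam : (X -> Y) -> Prop,
      (PECP rho d fam -> equi_Baire1 rho d fam) /\
      (hereditarily_Baire rho ->
         (equi_Baire1 rho d fam <-> PECP rho d fam)).
Proof.
  intros X Y rho d Hr Hd fam. split.
  - apply part1; assumption.
  - intros hB. split.
    + apply part2; assumption.
    + apply part1; assumption.
Qed.
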